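(* Let $\omega_1$ and $\omega_2$ be symplectic forms on $\mathbb{R}^{2n}$ with matrix representations $\Omega_1$ and $\Omega_2$. Then $\omega_1$ and $\omega_2$ are $\omega_{\mathrm{std}}$-symplectomorphic only if there exists $\varphi \in \operatorname{Symp}(\mathbb{R}^{2n},\omega_{\mathrm{std}})$ such that for every $x \in \mathbb{R}^{2n}$, $\operatorname{Pf}(\Omega_1(\varphi(x))) = \operatorname{Pf}(\Omega_2(x))$ and $\operatorname{s}(\Omega_1(\varphi(x))) = \operatorname{s}(\Omega_2(x))$.
   Context: A 2-form on $\mathbb{R}^{2n}$ (coordinates $x_1,\dots,x_{2n}$) is $\omega = \sum_{i<j}\omega_{i,j}\,dx_i\wedge dx_j$ with functions $\omega_{i,j}:\mathbb{R}^{2n}\to\mathbb{R}$; its matrix representation $\Omega(x)$ is the skew-symmetric matrix with $\Omega(x)_{i,j} = \omega_{i,j}(x)$ for $i<j$. A symplectic form is a smooth, closed 2-form with $\det\Omega(x)\neq 0$ for all $x$. The standard symplectic form is $\omega_{\mathrm{std}} = \sum_{i=1}^n dx_{2i-1}\wedge dx_{2i}$. The pullback is $(\varphi^*\omega)(x)(v,w) = \omega(\varphi(x))(d\varphi_x v, d\varphi_x w)$. $\operatorname{Symp}(\mathbb{R}^{2n},\omega_{\mathrm{std}})$ is the set of diffeomorphisms $\varphi$ of $\mathbb{R}^{2n}$ with $\varphi^*\omega_{\mathrm{std}} = \omega_{\mathrm{std}}$. Symplectic forms $\omega_1,\omega_2$ are $\omega_{\mathrm{std}}$-symplectomorphic if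 there is $\varphi \in \operatorname{Symp}(\mathbb{R}^{2n},\omega_{\mathrm{std}})$ with $\varphi^*\omega_1 = \omega_2$. For a skew-symmetric $2n\times 2n$ matrix $A$, $\operatorname{Pf}(A) = \frac{1}{2^n n!}\sum_{\sigma\in S_{2n}}\operatorname{sgn}(\sigma)\prod_{i=1}^n A_{\sigma(2i-1),\sigma(2i)}$ (so that $\operatorname{Pf}(A)^2=\det A$), and the sum function is $\operatorname{s}(A) = \sum_{i=1}^n A_{2i-1,2i}$. *)

(* Defs.v *)
From HB Require Import structures.
From mathcomp Require Import all_boot all_order all_algebra all_fingroup.
From mathcomp Require Import all_classical all_reals topology normedtype derive.
Set Implicit Arguments. Unset Strict Implicit. Unset Printing Implicit Defensive.
Import Order.TTheory GRing.Theory Num.Theory.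
Import numFieldNormedType.Exports.
Local Open Scope ring_scope.

Section Defs.
Variables (R : realType) (n : nat).

Local Notation N := (n.*2).
Local Notation pt := 'rV[R]_N.

Definition ebase (k : 'I_N) : pt := delta_mx 0 k.

Definition partial (k : 'I_N) (f : pt -> R) : pt -> R :=
  fun x => derive f x (ebase k).

Fixpoint iter_partial (s : seq 'I_N) (f : pt -> R) : pt -> R :=
  match s with
  | [::] => f
  | k :: s' => partial k (iter_partial s' f)
  end.

Definition smooth_fun (f : pt -> R) : Prop :=
  forall s : seq 'I_N,
    continuous (iter_partial s f) /\
    forall (k : 'I_N) (x : pt), derivable (iter_partial s f) x (ebase k).

Definition smooth_map (phi : pt -> pt) : Prop :=
  forall i : 'I_N, smooth_fun (fun x => phi x 0 i).

Definition diffeomorphism (phi : pt -> pt) : Prop :=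
  smooth_map phi /\
  exists psi : pt -> pt, [/\ cancel phi psi, cancel psi phi & smooth_map psi].

Definition jacobian (phi : pt -> pt) (x : pt) : 'M[R]_N :=
  \matrix_(i, j) partial j (fun y => phi y 0 i) x.

(* A 2-form sum_{i<j} w_{ij} dx_i /\ dx_j is represented by its skew-symmetric
   matrix function Omega, with Omega(x)_{ij} = w_{ij}(x) for i<j, so that
   w(x)(v,w) = v^T Omega(x) w. *)
Definition two_form := pt -> 'M[R]_N.

Definition skew_form (Om : two_form) : Prop := forall x, (Om x)^T = - Om x.

Definition smooth_form (Om : two_form) : Prop :=
  forall i j : 'I_N, (i < j)%N -> smooth_fun (fun x => Om x i j).

Definition closed_form (Om : two_form) : Prop :=
  forall (i j k : 'I_N) (x : pt),
    partial i (fun y => Om y j k) x + partial j (fun y => Om y k i) x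
    + partial k (fun y => Om y i j) x = 0.

Definition symplectic_form (Om : two_form) : Prop :=
  [/\ skew_form Om, smooth_form Om, closed_form Om & forall x, \det (Om x) != 0].

(* standard form  sum_{i=1}^n dx_{2i-1} /\ dx_{2i}  (1-based), i.e. 0-based
   pairs (2i, 2i+1) *)
Definition Omega_std : two_form := fun _ =>
  \matrix_(i, j) (if ~~ odd i && (j == i.+1 :> nat) then 1
                  else if ~~ odd j && (i == j.+1 :> nat) then -1 else 0).

(* pullback matrix: (phi^* omega)(x)(v,w) = omega(phi x)(dphi v, dphi w) *)
Definition pullback (phi : pt -> pt) (Om : two_form) : two_form :=
  fun x => (jacobian phi x)^T *m Om (phi x) *m jacobian phi x.

Definition symp_std (phi : pt -> pt) : Prop :=
  diffeomorphism phi /\ pullback phi Omega_std = Omega_std.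

Definition std_symplectomorphic (Om1 Om2 : two_form) : Prop :=
  exists phi, symp_std phi /\ pullback phi Om1 = Om2.

(* indices 2i-1, 2i (1-based) = 2i, 2i+1 (0-based) *)
Lemma odd_idx_lt (i : 'I_n) : (i.*2 < N)%N.
Proof. by rewrite ltn_double. Qed.
Lemma even_idx_lt (i : 'I_n) : (i.*2.+1 < N)%N.
Proof. by rewrite -doubleS leq_double. Qed.
Definition idx1 (i : 'I_n) : 'I_N := Ordinal (odd_idx_lt i).
Definition idx2 (i : 'I_n) : 'I_N := Ordinal (even_idx_lt i).

Definition pfaffian (A : 'M[R]_N) : R :=
  ((2 ^+ n * (n`!)%:R)^-1) *
  \sum_(s : 'S_N) (-1) ^+ s * \prod_(i < n) A (s (idx1 i)) (s (idx2 i)).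

Definition sum_fn (A : 'M[R]_N) : R := \sum_(i < n) A (idx1 i) (idx2 i).

End Defs.

(* Main.v *)
Require Import Defs.
From HB Require Import structures.
From mathcomp Require Import all_boot all_order all_algebra all_fingroup.
From mathcomp Require Import all_classical all_reals topology normedtype derive.
From mathcomp Require Import zify.
Import Order.TTheory GRing.Theory Num.Theory.
Set Implicit Arguments. Unset Strict Implicit. Unset Printing Implicit Defensive.
Local Open Scope ring_scope.

Section Pix.
Variable n : nat.
Local Notation N := (n.*2).

Definition pix (i : 'I_n) (b : bool) : 'I_N := if b then idx2 i else idx1 i.

Lemma val_pix i b : (pix i b : nat) = (b + i.*2)%N.
Proof. by case: b. Qed.

Lemma half_lt (j : 'I_N) : (j./2 < n)%N.
Proof. by rewrite ltn_half_double. Qed.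

Definition hix (j : 'I_N) : 'I_n := Ordinal (half_lt j).

Lemma pixK j : pix (hix j) (odd j) = j.
Proof. by apply: val_inj; rewrite /= val_pix; exact: odd_double_half. Qed.

Lemma half_pix i b : hix (pix i b) = i.
Proof. by apply: val_inj; rewrite /= val_pix half_bit_double. Qed.

Lemma odd_pix i b : odd (pix i b) = b.
Proof. by rewrite val_pix oddD odd_double addbF; case: b. Qed.

Lemma eq_pix i b i' b' : (pix i b == pix i' b') = (i == i') && (b == b').
Proof.
apply/idP/idP => [/eqP E|/andP[/eqP -> /eqP ->]] //.
have h1 := congr1 hix E; have h2 := congr1 (fun j : 'I_N => odd j) E.
rewrite !half_pix in h1; rewrite /= !odd_pix in h2.
by rewrite h1 h2 !eqxx.
Qed.

Lemma big_pix (T : Type) (idx : T) (op : Monoid.com_law idx) (F : 'I_N -> T) :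
  \big[op/idx]_(j : 'I_N) F j = \big[op/idx]_(i : 'I_n) op (F (pix i true)) (F (pix i false)).
Proof.
rewrite (reindex (fun p : 'I_n * bool => pix p.1 p.2)) /=; last first.
  exists (fun j => (hix j, odd j)) => [[i b] _ | j _] /=.
    by rewrite half_pix odd_pix.
  by rewrite pixK.
rewrite -(pair_bigA _ (fun i b => F (pix i b))) /=.
by apply: eq_bigr => i _; rewrite big_bool.
Qed.

End Pix.

Lemma Om_pix (R : realType) n x (i : 'I_n) (b : bool) (i' : 'I_n) (b' : bool) :
  @Omega_std R n x (pix i b) (pix i' b') =
  if i == i' then (if b == b' then 0 else if b then -1 else 1) else 0.
Proof.
rewrite /Omega_std mxE !val_pix !oddD !odd_double !addbF.
have E : (i == i') = (i == i' :> nat) by [].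
rewrite E.
case: b; case: b' => /=; rewrite ?add0n ?add1n ?eqSS.
all: repeat (case: ifP => /= ?); try lia; done.
Qed.



Section PfLaw.
Variables (R : realType) (n : nat).
Local Notation N := (n.*2).

Definition Pg (A : 'M[R]_N) : R :=
  \sum_(s : 'S_N) (-1) ^+ s * \prod_(i < n) A (s (idx1 i)) (s (idx2 i)).

Lemma pfaffianE A : pfaffian A = (2 ^+ n * (n`!)%:R)^-1 * Pg A.
Proof. by []. Qed.

Definition toF (g : {ffun 'I_N -> 'I_N}) : {ffun 'I_n -> 'I_N * 'I_N} :=
  [ffun i => (g (idx1 i), g (idx2 i))].
Definition ofF (f : {ffun 'I_n -> 'I_N * 'I_N}) : {ffun 'I_N -> 'I_N} :=
  [ffun j : 'I_N => if odd j then (f (hix j)).2 else (f (hix j)).1].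

Lemma expand (F : 'I_n -> 'I_N -> 'I_N -> R) :
  \prod_(i < n) \sum_(p : 'I_N * 'I_N) F i p.1 p.2 =
  \sum_(g : {ffun 'I_N -> 'I_N}) \prod_(i < n) F i (g (idx1 i)) (g (idx2 i)).
Proof.
rewrite bigA_distr_bigA /= (reindex toF) /=; last first.
  exists ofF => [g _ | f _]; apply/ffunP => j; rewrite !ffunE.
    rewrite -(pixK j); case: (odd j); rewrite odd_pix half_pix ?ffunE //.
  have -> : idx1 j = pix j false by [].
  have -> : idx2 j = pix j true by [].
  by rewrite !odd_pix !half_pix; case: (f j).
by apply: eq_bigr => g _; apply: eq_bigr => i _; rewrite ffunE.
Qed.

Lemma congr_entry (A B : 'M[R]_N) x y :
  (B^T *m A *m B) x y = \sum_(p : 'I_N * 'I_N) B p.1 x * A p.1 p.2 * B p.2 y.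
Proof.
rewrite mxE -(pair_bigA _ (fun k l => B k x * A k l * B l y)) /=.
rewrite [RHS]exchange_big /=; apply: eq_bigr => l _.
rewrite mxE big_distrl /=; apply: eq_bigr => k _.
by rewrite mxE.
Qed.

Lemma Pg_congr (A B : 'M[R]_N) : Pg (B^T *m A *m B) = \det B * Pg A.
Proof.
rewrite /Pg.
have step (s : 'S_N) : \prod_(i < n) (B^T *m A *m B) (s (idx1 i)) (s (idx2 i)) =
   \sum_(g : {ffun 'I_N -> 'I_N}) \prod_(i < n) (B (g (idx1 i)) (s (idx1 i)) * A (g (idx1 i)) (g (idx2 i)) * B (g (idx2 i)) (s (idx2 i))).
  rewrite -(expand (fun i k l => B k (s (idx1 i)) * A k l * B l (s (idx2 i)))).
  by apply: eq_bigr => i _; exact: congr_entry.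
under eq_bigr => s _ do rewrite step big_distrr /=.
rewrite exchange_big /=.
pose a (g : {ffun 'I_N -> 'I_N}) := \prod_(i < n) A (g (idx1 i)) (g (idx2 i)).
transitivity (\sum_(g : {ffun 'I_N -> 'I_N}) a g * \det (\matrix_(j, m) B (g j) m)).
  apply: eq_bigr => g _; rewrite /determinant big_distrr /=; apply: eq_bigr => s _.
  rewrite mulrCA; congr (_ * _).
  rewrite /a (big_pix _ (fun j => (\matrix_(j0, m) B (g j0) m) j (s j))) -big_split /=.
  apply: eq_bigr => i _; rewrite !mxE.
  have -> : idx1 i = pix i false by [].
  have -> : idx2 i = pix i true by [].
  by rewrite mulrC [B _ (s (pix i false)) * _]mulrC mulrCA.
rewrite (bigID (fun g : {ffun 'I_N -> 'I_N} => injectiveb g)) /=.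
rewrite [X in _ + X]big1 ?addr0 => [|g Ng]; last first.
  case/injectivePn: Ng => j1 [j2 Dj Ej].
  by rewrite (determinant_alternate Dj) ?mulr0 // => m; rewrite !mxE Ej.
rewrite (reindex (@pval _)) /=; last first.
  pose in_Sn := insubd (1%g : 'S_N).
  by exists in_Sn => /= f Uf; first apply: val_inj; apply: insubdK.
rewrite big_distrr /=; apply: eq_big => /= [s | s _]; first by rewrite (valP s).
have -> : \matrix_(j, m) B (pval s j) m = row_perm s B.
  by apply/matrixP => j m; rewrite !mxE pvalE.
rewrite row_permE det_mulmx det_perm /a.
rewrite [LHS]mulrC [RHS]mulrCA [RHS]mulrA; congr (_ * _).
by apply: eq_bigr => i _; rewrite !pvalE.
Qed.
End PfLaw.



Section Sign.
Variable n : nat.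
Local Notation N := (n.*2).

Definition Lf (s : 'S_n) (c : 'I_n -> bool) (j : 'I_N) : 'I_N :=
  pix (s (hix j)) (odd j (+) c (hix j)).

Lemma Lf_inj s c : injective (Lf s c).
Proof.
move=> j1 j2; rewrite /Lf => /eqP; rewrite eq_pix => /andP[/eqP /perm_inj E1 /eqP].
by rewrite E1 => /addIb E2; rewrite -(pixK j1) -(pixK j2) E1 E2.
Qed.

Definition L s c : 'S_N := perm (@Lf_inj s c).

Lemma LE s c i b : L s c (pix i b) = pix (s i) (b (+) c i).
Proof. by rewrite permE /Lf half_pix odd_pix. Qed.

Lemma Lmul s c : L s c = (L 1 c * L s (fun _ => false))%g.
Proof.
by apply/permP => j; rewrite -(pixK j) permM !LE perm1 addbF.
Qed.

Lemma Lliftmul s1 s2 : L (s1 * s2) (fun _ => false) = (L s1 (fun _ => false) * L s2 (fun _ => false))%g.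
Proof. by apply/permP => j; rewrite -(pixK j) permM !LE permM !addbF. Qed.

Lemma Llift1 : L 1 (fun _ => false) = 1%g.
Proof. by apply/permP => j; rewrite -(pixK j) LE !perm1 addbF. Qed.

Lemma Ltperm a b : L (tperm a b) (fun _ => false) =
  (tperm (pix a false) (pix b false) * tperm (pix a true) (pix b true))%g.
Proof.
apply/permP => j; rewrite -(pixK j) permM LE addbF.
move: (hix j) (odd j) => i bb.
have pinj (c : bool) : injective (fun x : 'I_n => pix x c).
  by move=> x y /eqP; rewrite eq_pix eqxx andbT => /eqP.
case: bb.
  rewrite [in RHS](@tpermD _ (pix a false)) ?eq_pix ?andbF //.
  exact: (inj_tperm _ _ _ (pinj true)).
have e : tperm (pix a false) (pix b false) (pix i false) = pix (tperm a b i) false.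
  by rewrite (inj_tperm _ _ _ (pinj false)).
by rewrite e [RHS]tpermD // eq_pix andbF.
Qed.

Lemma odd_lift s : odd_perm (L s (fun _ => false)) = false.
Proof.
case: (prod_tpermP s) => ts -> _; elim: ts => [|t ts IH].
  by rewrite big_nil Llift1 odd_perm1.
rewrite big_cons Lliftmul odd_permM IH Ltperm odd_permM !odd_tperm !eq_pix !andbT.
by case: (t.1 == t.2).
Qed.

Lemma odd_L1 (S : {set 'I_n}) : odd_perm (L 1 (fun i => i \in S)) = odd #|S|.
Proof.
move: {2}#|S| (erefl #|S|) => m; elim: m S => [|m IH] S cS.
  move/eqP: cS; rewrite cards_eq0 => /eqP ->.
  rewrite (_ : L 1 _ = 1%g) ?odd_perm1 ?cards0 //.
  by apply/permP => j; rewrite -(pixK j) LE finset.in_set0 !perm1 addbF.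
have : S != finset.set0 by rewrite -card_gt0 cS.
case/set0Pn => i iS.
have cS' : #|S :\ i| = m by move: cS; rewrite (cardsD1 i) iS => -[].
have -> : L 1 (fun j => j \in S) = (L 1 (fun j => j \in S :\ i) * tperm (pix i false) (pix i true))%g.
  apply/permP => j; rewrite -(pixK j) permM !LE !perm1.
  move: (hix j) (odd j) => k bb.
  case: (eqVneq k i) => [->|ne].
    by rewrite setD11 iS addbF addbT; case: bb; [rewrite tpermR | rewrite tpermL].
  by rewrite in_setD1 ne andTb tpermD // eq_pix eq_sym (negbTE ne).
by rewrite odd_permM IH // odd_tperm eq_pix eqxx /= cS cS' /= addbT.
Qed.
End Sign.



Section OmFacts.
Variables (R : realType) (n : nat).
Local Notation N := (n.*2).
Local Notation Om := (@Omega_std R n 0).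

Lemma pix_ext (x y : 'I_N) : hix x = hix y -> odd x = odd y -> x = y.
Proof. by move=> h o; rewrite -(pixK x) -(pixK y) h o. Qed.

Lemma rowOm i b (F : 'I_N -> R) :
  \sum_(k : 'I_N) Om (pix i b) k * F k = (if b then -1 else 1) * F (pix i (~~ b)).
Proof.
rewrite (bigD1 (pix i (~~ b))) //= big1 => [|k nk].
  by rewrite Om_pix eqxx addr0; case: b.
rewrite -(pixK k) Om_pix; case: eqP => [E|]; last by rewrite mul0r.
case: eqP => [_|O]; first by rewrite mul0r.
move: nk; rewrite -{1}(pixK k) -E eq_pix eqxx /=.
by case: b O; case: (odd k) => //= O; case: O.
Qed.

Lemma OmOm : Om *m Om = - 1%:M.
Proof.
apply/matrixP => x y; rewrite !mxE -(pixK x) -(pixK y).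
move: (hix x) (odd x) (hix y) (odd y) => i b i' b'.
rewrite rowOm Om_pix eq_pix.
case: (i == i'); case: b; case: b' => /=; rewrite ?mulr0 ?mulr1 ?mulN1r ?oppr0 ?mul1r ?mulr1n ?mulr0n ?oppr0 //.

Qed.

Lemma trOm (A : 'M[R]_N) :
  \tr (Om *m A) = \sum_(i < n) (A (idx2 i) (idx1 i) - A (idx1 i) (idx2 i)).
Proof.
rewrite /mxtrace (big_pix _ (fun j => (Om *m A) j j)) /=.
apply: eq_bigr => i _; rewrite !mxE (rowOm i true (fun j => A j (idx2 i))) (rowOm i false (fun j => A j (idx1 i))) /=.
rewrite mulN1r mul1r addrC.
by [].
Qed.

Lemma Om_nz x y : Om x y != 0 -> hix y = hix x /\ odd y = ~~ odd x.
Proof.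
rewrite -(pixK x) -(pixK y) Om_pix !half_pix !odd_pix.
move: (hix x) (odd x) (hix y) (odd y) => i b i' b'.
case: (eqVneq i i') => [->|]; last by rewrite eqxx.
by case: b; case: b'; rewrite ?eqxx.
Qed.

Lemma term_ge0 (s : 'S_N) :
  0 <= (-1) ^+ s * \prod_(i < n) Om (s (idx1 i)) (s (idx2 i)).
Proof.
case: (eqVneq (\prod_(i < n) Om (s (idx1 i)) (s (idx2 i))) 0) => [->|nz].
  by rewrite mulr0.
move/prodf_neq0: nz => nz.
have H i : hix (s (idx2 i)) = hix (s (idx1 i)) /\ odd (s (idx2 i)) = ~~ odd (s (idx1 i)).
  exact: Om_nz (nz i isT).
pose sf i := hix (s (idx1 i)).
have sf_inj : injective sf.
  move=> i1 i2; rewrite /sf => E.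
  case: (eqVneq (odd (s (idx1 i1))) (odd (s (idx1 i2)))) => [O|O].
    have := pix_ext E O; move/perm_inj/eqP.
    by rewrite (_ : idx1 i1 = pix i1 false) // (_ : idx1 i2 = pix i2 false) // eq_pix => /andP[/eqP].
  have E' : hix (s (idx1 i1)) = hix (s (idx2 i2)) by rewrite E (H i2).1.
  have O' : odd (s (idx1 i1)) = odd (s (idx2 i2)).
    by rewrite (H i2).2; move: O; case: (odd _); case: (odd _).
  have := pix_ext E' O'; move/perm_inj/eqP.
  by rewrite (_ : idx1 i1 = pix i1 false) // (_ : idx2 i2 = pix i2 true) // eq_pix andbF.
pose sg := perm sf_inj.
pose c i := odd (s (idx1 i)).
have Es : s = L sg c.
  apply/permP => j; rewrite -(pixK j) LE permE /sf /c.
  move: (hix j) (odd j) => i [] /=.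
    by apply: pix_ext; rewrite ?half_pix ?odd_pix ?(H i).1 ?(H i).2.
  by rewrite pixK.
have Os : odd_perm s = odd #|[set i | c i]|.
  rewrite Es Lmul odd_permM odd_lift addbF -odd_L1; congr (odd_perm (L 1 _)).
  by apply: boolp.funext => i; rewrite inE.
have Ps : \prod_(i < n) Om (s (idx1 i)) (s (idx2 i)) = \prod_(i < n) (if c i then -1 else 1).
  apply: eq_bigr => i _.
  rewrite (_ : idx1 i = pix i false) // (_ : idx2 i = pix i true) // Es !LE Om_pix eqxx.
  by case: (c i).
rewrite Os Ps -big_mkcond /= prodr_const signr_odd.
by rewrite cardsE -expr2 sqrr_sign ler01.
Qed.

Lemma Pg_Om_gt0 : 0 < Pg Om.
Proof.
rewrite /Pg (bigD1 1%g) //= odd_perm1 expr0 mul1r.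
rewrite big1 => [|i _]; last first.
  by rewrite !perm1 (_ : idx1 i = pix i false) // (_ : idx2 i = pix i true) // Om_pix eqxx.
apply: (lt_le_trans ltr01); rewrite lerDl.
by apply: sumr_ge0 => s _; exact: term_ge0.
Qed.

End OmFacts.



Lemma tr_skew (R : realType) n (M : 'M[R]_(n.*2)) : M^T = - M ->
  \tr (@Omega_std R n 0 *m M) = - (sum_fn M *+ 2).
Proof.
move=> sk; rewrite trOm /sum_fn -sumrMnl -sumrN; apply: eq_bigr => i _.
have -> : M (idx2 i) (idx1 i) = - M (idx1 i) (idx2 i).
  by have := congr1 (fun B : 'M[R]_(n.*2) => B (idx1 i) (idx2 i)) sk; rewrite !mxE.
rewrite mulr2n opprD. exact: erefl.
Qed.

Lemma symp_conj (R : realType) n (J : 'M[R]_(n.*2)) :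
  J^T *m @Omega_std R n 0 *m J = @Omega_std R n 0 ->
  J *m @Omega_std R n 0 *m J^T = @Omega_std R n 0.
Proof.
set Om := Omega_std 0 => HJ.
have L1 : (- (Om *m J^T *m Om)) *m J = 1%:M.
  by rewrite mulNmx -!mulmxA [J^T *m (Om *m J)]mulmxA HJ OmOm opprK.
have L2 := mulmx1C L1.
have : J *m - (Om *m J^T *m Om) *m Om = Om by rewrite L2 mul1mx.
rewrite mulmxN mulNmx -!mulmxA OmOm mulmxN mulmx1 !mulmxN opprK.
by rewrite !mulmxA.
Qed.

Lemma Om_const (R : realType) n (y : 'rV[R]_(n.*2)) : @Omega_std R n y = @Omega_std R n 0.
Proof. by []. Qed.

Theorem theorem2p4 (R : realType) (n : nat) (Om1 Om2 : two_form R n) :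
  symplectic_form Om1 -> symplectic_form Om2 ->
  std_symplectomorphic Om1 Om2 ->
  exists phi : 'rV[R]_(n.*2) -> 'rV[R]_(n.*2),
    symp_std phi /\
    forall x : 'rV[R]_(n.*2),
      pfaffian (Om1 (phi x)) = pfaffian (Om2 x) /\
      sum_fn (Om1 (phi x)) = sum_fn (Om2 x).
Proof.
move=> [sk1 _ _ _] [sk2 _ _ _] [phi [[dphi Hs] Hpb]].
exists phi; split => // x.
set J := Defs.jacobian phi x; set A := Om1 (phi x).
have E2 : Om2 x = J^T *m A *m J by rewrite -Hpb; reflexivity.
have HJ : J^T *m @Omega_std R n 0 *m J = @Omega_std R n 0.
  have h : pullback phi (@Omega_std R n) x = @Omega_std R n x by rewrite Hs.
  rewrite /pullback (Om_const (phi x)) (Om_const x) -/J in h.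
  exact h.
have detJ : \det J = 1.
  have h := Pg_congr (@Omega_std R n 0) J; rewrite HJ in h.
  have nz : Pg (@Omega_std R n 0) != 0 := lt0r_neq0 (@Pg_Om_gt0 R n).
  by apply: (mulIf nz); rewrite mul1r -h.
split; first by rewrite E2 !pfaffianE Pg_congr detJ mul1r.
have t2 := tr_skew (sk2 x); have t1 := tr_skew (sk1 (phi x)).
rewrite E2 -/A in t2.
have : \tr (@Omega_std R n 0 *m (J^T *m A *m J)) = \tr (@Omega_std R n 0 *m A).
  by rewrite !mulmxA [LHS]mxtrace_mulC !mulmxA (symp_conj HJ).
have h2 (a b : R) : a *+ 2 = b *+ 2 -> a = b.
  by move=> /eqP; rewrite -subr_eq0 -mulrnBl mulrn_eq0 /= subr_eq0 => /eqP.
rewrite -/A in t1; rewrite t2 t1 E2 => /oppr_inj /h2 ->.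
by [].
Qed.
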